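(* Let $G$ be a finite simple connected graph without isolated vertices. Then Dom has a winning strategy in the Sepy-start Disjoint Domination Game on $G$ even when Sepy is allowed to pass at any time except in the first move of the game (Dom not passing).
   Context: For a vertex $v$, $N[v]$ denotes its closed neighborhood. The Disjoint Domination Game on an isolate-free graph $G$ is played by Dom and Sepy with colors $p$ and $b$; $V_p,V_b$ denote the current sets of vertices of each color. Players alternate; either player may use either color. A move chooses a vertex $v$ and a color $c$ such that (i) $v$ is uncolored and (ii) some $u\in N[v]$ satisfies $N[u]\cap V_c=\emptyset$ (before the move); then $v$ gets color $c$. In this variant Sepy may pass instead of moving on any of his turns except the first move of the game, which is Sepy's. The game ends as soon as either (s* ) some vertex $v$ has $N[v]\subseteq V_p$ or $N[v]\subseteq V_b$ — Sepy wins; or (d* ) both $V_p$ and $V_b$ are dominating sets of $G$ — Dom wins. *)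

(* Defs.v *)
From mathcomp Require Import all_boot.
Set Implicit Arguments. Unset Strict Implicit. Unset Printing Implicit Defensive.

(* A simple graph: vertex type T : finType, adjacency e : rel T
   (symmetric, irreflexive; hypotheses in the theorem).
   Colors: true = p, false = b.  A game position is a partial coloring
   f : {ffun T -> option bool} (None = uncolored). *)

Section Game.
Variables (T : finType) (e : rel T).

Definition cnbh (v : T) : {set T} := [set u | (u == v) || e v u].

Definition coloring := {ffun T -> option bool}.

Definition empty_coloring : coloring := [ffun _ => None].

Definition Vcol (f : coloring) (c : bool) : {set T} := [set x | f x == Some c].

Definition dominating (D : {set T}) : Prop :=
  forall v : T, exists2 u, u \in cnbh v & u \in D.

Definition sepy_wins_now (f : coloring) : Prop :=
  exists v : T, exists c : bool, cnbh v \subset Vcol f c.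

Definition dom_wins_now (f : coloring) : Prop :=
  dominating (Vcol f true) /\ dominating (Vcol f false).

Definition legal (f : coloring) (v : T) (c : bool) : Prop :=
  f v = None /\ exists2 u, u \in cnbh v & cnbh u :&: Vcol f c = set0.

Definition play (f : coloring) (v : T) (c : bool) : coloring :=
  [ffun x => if x == v then Some c else f x].

(* Whose turn: Dom, or Sepy (with flag: whether Sepy may pass). *)
Inductive turn := DomTurn | SepyTurn of bool.

(* dom_wins t f : from position f with t to move, Dom has a strategy that
   forces the game to end with (d-star) (the game is finite: Dom never passes
   and every Dom move colors a new vertex, so the least fixed point
   captures exactly "Dom has a winning strategy"). *)
Inductive dom_wins : turn -> coloring -> Prop :=
| dw_end t f :
    ~ sepy_wins_now f -> dom_wins_now f -> dom_wins t f
| dw_dom f v c :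
    ~ sepy_wins_now f -> ~ dom_wins_now f ->
    legal f v c -> dom_wins (SepyTurn true) (play f v c) -> dom_wins DomTurn f
| dw_sepy (may_pass : bool) f :
    ~ sepy_wins_now f -> ~ dom_wins_now f ->
    (forall v c, legal f v c -> dom_wins DomTurn (play f v c)) ->
    (may_pass -> dom_wins DomTurn f) ->
    dom_wins (SepyTurn may_pass) f.

End Game.

(* Main.v *)
From Stdlib Require Import Classical.
Require Import Defs.
From mathcomp Require Import all_boot.

Set Implicit Arguments. Unset Strict Implicit. Unset Printing Implicit Defensive.

Definition sat (T : finType) (e : rel T) (f : coloring T) (z : T) : Prop :=
  forall c, exists2 u, u \in cnbh e z & f u = Some c.

Definition uncol (T : finType) (f : coloring T) : {set T} := [set z | f z == None].

Lemma cnbh_refl (T : finType) (e : rel T) v : v \in cnbh e v.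
Proof. by rewrite inE eqxx. Qed.

Lemma play_v (T : finType) (f : coloring T) v c : play f v c v = Some c.
Proof. by rewrite ffunE eqxx. Qed.

Lemma play_ne (T : finType) (f : coloring T) v c x : x != v -> play f v c x = f x.
Proof. by move=> h; rewrite ffunE (negbTE h). Qed.

Lemma sat_play (T : finType) (e : rel T) (f : coloring T) v c z :
  f v = None -> sat e f z -> sat e (play f v c) z.
Proof.
move=> fv hs d; case: (hs d) => u hu fu; exists u => //.
rewrite ffunE; case: eqP => // E; subst u; by rewrite fu in fv.
Qed.

Lemma sat_two (T : finType) (e : rel T) (f : coloring T) z u1 u2 c :
  u1 \in cnbh e z -> f u1 = Some c -> u2 \in cnbh e z -> f u2 = Some (~~ c) ->
  sat e f z.
Proof.
move=> h1 f1 h2 f2 d; case: (eqVneq d c) => [->|hdc]; first by exists u1.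
exists u2 => //; rewrite f2; congr Some; by move: hdc; clear; case: d; case: c.
Qed.

Lemma J_nosepy (T : finType) (e : rel T) (f : coloring T) :
  (forall z, f z <> None -> sat e f z) -> ~ sepy_wins_now e f.
Proof.
move=> hJ [v [c hsub]].
have hv : v \in Vcol f c := subsetP hsub v (cnbh_refl e v).
rewrite inE in hv; move/eqP: hv => fv.
have [u hu fu] := hJ v (ltac:(by rewrite fv)) (~~ c).
have := subsetP hsub u hu; rewrite inE fu.
by case: c {fv hsub fu}.
Qed.

Lemma nodom (T : finType) (e : rel T) (f : coloring T) :
  ~ dom_wins_now e f -> exists u d, forall y, y \in cnbh e u -> f y <> Some d.
Proof.
move=> h.
have [d hd] : exists d, ~ dominating e (Vcol f d).
  apply: NNPP => hn; apply: h; split; apply: NNPP => H; apply: hn; eauto.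
have [u hu] := not_all_ex_not _ _ hd.
exists u, d => y hy fy; apply: hu; exists y => //; by rewrite inE fy.
Qed.

Lemma legal_of (T : finType) (e : rel T) (f : coloring T) v c w :
  f v = None -> w \in cnbh e v ->
  (forall y, y \in cnbh e w -> f y <> Some c) -> legal e f v c.
Proof.
move=> fv hw H; split => //; exists w => //.
apply/setP => y; rewrite in_setI in_set0; apply/negbTE/andP => -[h1 h2].
rewrite inE in h2; exact: (H y h1 (eqP h2)).
Qed.

Lemma legal_inv (T : finType) (e : rel T) (f : coloring T) v c :
  legal e f v c -> f v = None /\
  exists2 w, w \in cnbh e v & forall y, y \in cnbh e w -> f y <> Some c.
Proof.
case=> fv [w hw hcap]; split => //; exists w => // y hy fy.
have : y \in cnbh e w :&: Vcol f c by rewrite in_setI hy inE fy eqxx.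
by rewrite hcap in_set0.
Qed.

Lemma closed_connect (T : finType) (e : rel T) (P : pred T) :
  (forall a b, e a b -> P a -> P b) -> forall s y, connect e s y -> P s -> P y.
Proof.
move=> hcl s y /connectP [p hp ->].
elim: p s hp => [|z p IH] s //= /andP [hsz hp] Ps.
apply: IH hp _; exact: hcl hsz Ps.
Qed.

Lemma cnbh_sym (T : finType) (e : rel T) : symmetric e ->
  forall u v, (u \in cnbh e v) = (v \in cnbh e u).
Proof. by move=> hs u v; rewrite !inE eq_sym hs. Qed.

Definition DomPre (T : finType) (e : rel T) (f : coloring T) (x : T) : Prop :=
  ~ sepy_wins_now e f /\ (exists z, f z <> None) /\
  (forall z, f z <> None -> z != x -> sat e f z).

Definition SepyPre (T : finType) (e : rel T) (b : bool) (f : coloring T) : Prop :=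
  (forall z, f z <> None -> sat e f z) /\ (b -> exists z, f z <> None).

Lemma step (T : finType) (e : rel T) :
  symmetric e -> irreflexive e ->
  (forall x y : T, connect e x y) ->
  (forall v : T, exists u : T, e v u) ->
  forall n (f : coloring T), #|uncol f| = n ->
  (forall x, DomPre e f x -> dom_wins e DomTurn f) /\
  (forall b, SepyPre e b f -> dom_wins e (SepyTurn b) f).
Proof.
move=> hsym hirr hconn hiso n; elim/ltn_ind: n => n IH f hn.
have card_play : forall v c, f v = None -> #|uncol (play f v c)| < n.
  move=> v c fv; rewrite -hn; apply: proper_card; apply/properP; split.
    apply/subsetP => z; rewrite /uncol !inE ffunE; case: (z == v) => //.
  by exists v; rewrite /uncol !inE ?ffunE ?eqxx ?fv.
have hB : forall x, DomPre e f x -> dom_wins e DomTurn f.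
  move=> x [hns [[z0 hz0] hJ]].
  have hA' : forall y d, legal e f y d ->
      (forall z, play f y d z <> None -> sat e (play f y d) z) ->
      dom_wins e (SepyTurn true) (play f y d).
    move=> y d hl hJ'; have fy := (legal_inv hl).1.
    apply: ((IH _ (card_play y d fy) _ erefl).2 true); split => // _.
    by exists y; rewrite play_v.
  case: (classic (dom_wins_now e f)) => hdw; first exact: dw_end.
  case: (classic (f x <> None /\ ~ sat e f x)) => [[hx hnx]|hsx].
    case E: (f x) hx => [c|] // _.
    have lack : forall y, y \in cnbh e x -> f y <> Some (~~ c).
      move=> y hy fy; apply: hnx; apply: (sat_two (u1:=x) (u2:=y) (c:=c)) => //.
      exact: cnbh_refl.
    have [y hy fy] : exists2 y, y \in cnbh e x & f y = None.
      apply: NNPP => H; apply: hns; exists x, c; apply/subsetP => y hy.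
      rewrite inE; case Ey: (f y) => [d|]; last by exfalso; apply: H; exists y.
      have := lack y hy; rewrite Ey; by case: c d {E lack Ey hy} => [] [] //= /(_ erefl).
    have yx : y != x by apply/eqP => yx; subst y; rewrite E in fy.
    have xy : x \in cnbh e y by rewrite cnbh_sym.
    have hl := legal_of fy xy lack.
    apply: (dw_dom hns hdw hl); apply: (hA' _ _ hl) => z hz.
    case: (eqVneq z y) => [->|zy].
      apply: (sat_two (u1:=x) (u2:=y) (c:=c)) => //; last by rewrite play_v.
        by rewrite play_ne 1?eq_sym.
      exact: cnbh_refl.
    case: (eqVneq z x) => [->|zx].
      apply: (sat_two (u1:=x) (u2:=y) (c:=c)) => //; last by rewrite play_v.
        exact: cnbh_refl.
      by rewrite play_ne 1?eq_sym.
    apply: sat_play => //; apply: hJ => //; by rewrite -(play_ne f (~~c) zy).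
  have hJf : forall z, f z <> None -> sat e f z.
    move=> z hz; case: (eqVneq z x) => [E|]; last exact: hJ.
    subst z; apply: NNPP => hs; apply: hsx; by split.
  have [u [d hu]] := nodom hdw.
  have fu : f u = None.
    case Eu: (f u) => [c'|] //; have [w hw fw] := hJf u (ltac:(by rewrite Eu)) d.
    by exfalso; exact: hu w hw fw.
  case: (classic (exists2 w, w \in cnbh e u & f w <> None)) => [[w hw fw]|hnone].
    case Ew: (f w) fw => [c'|] // _.
    have c'd : c' = ~~ d.
      have H := hu w hw; rewrite Ew in H; by destruct c', d; try (exfalso; exact: H erefl).
    have hl := legal_of fu (cnbh_refl e u) hu.
    apply: (dw_dom hns hdw hl); apply: (hA' _ _ hl) => z hz.
    case: (eqVneq z u) => [->|zu].
      apply: (sat_two (u1:=u) (u2:=w) (c:=d)); first exact: cnbh_refl.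
          by rewrite play_v.
        by [].
      have wu : w != u by apply/eqP => E; subst w; rewrite fu in Ew.
      by rewrite play_ne // Ew c'd.
    apply: sat_play => //; apply: hJf; by rewrite -(play_ne f d zu).
  pose P := fun v => [forall w in cnbh e v, f w == None].
  have Pu : P u.
    apply/forall_inP => w hw; apply/eqP; case Ew: (f w) => [c'|] //.
    by exfalso; apply: hnone; exists w => //; rewrite Ew.
  have nPz0 : ~~ P z0.
    apply/negP => /forall_inP /(_ z0 (cnbh_refl e z0)) /eqP; exact: hz0.
  have [a [b [hab [Pa nPb]]]] : exists a b, e a b /\ P a /\ ~~ P b.
    apply: NNPP => H; move/negP: nPz0; apply.
    apply: (closed_connect (P:=P) _ (hconn u z0) Pu) => a b hab Pa.
    apply/negPn/negP => nPb; apply: H; by exists a, b.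
  move: nPb; rewrite negb_forall_in => /exists_inP [x1 hx1 fx1].
  have ba : b \in cnbh e a by rewrite inE hab orbT.
  have fb : f b = None by apply/eqP; move/forall_inP: Pa; apply.
  case Ex1: (f x1) fx1 => [a1|] // _.
  have x1b : x1 != b by apply/eqP => E; subst x1; rewrite fb in Ex1.
  have hl : legal e f b (~~a1).
    apply: (legal_of (w:=a) fb); first by rewrite cnbh_sym.
    move=> y hy; move/forall_inP: Pa => /(_ y hy) /eqP ->; by [].
  apply: (dw_dom hns hdw hl); apply: (hA' _ _ hl) => z hz.
  case: (eqVneq z b) => [->|zb].
    apply: (sat_two (u1:=x1) (u2:=b) (c:=a1)) => //; last by rewrite play_v.
      by rewrite play_ne.
    exact: cnbh_refl.
  apply: sat_play => //; apply: hJf; by rewrite -(play_ne f (~~a1) zb).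
split; first exact: hB.
move=> b [hJf hb]; have hns := J_nosepy hJf.
case: (classic (dom_wins_now e f)) => hdw; first exact: dw_end.
apply: dw_sepy => //.
  move=> v c hl; have [fv [w hw hwl]] := legal_inv hl.
  apply: ((IH _ (card_play v c fv) _ erefl).1 v); split; last split.
  - move=> [u [c' hsub]].
    have hu : play f v c u = Some c'.
      by move: (subsetP hsub u (cnbh_refl e u)); rewrite inE => /eqP.
    case: (eqVneq u v) => [E|uv].
      subst u; rewrite play_v in hu; case: hu => E; subst c'.
      have hw' : play f v c w = Some c by move: (subsetP hsub w hw); rewrite inE => /eqP.
      case: (eqVneq w v) => [E|wv].
        subst w; have [u' hu'] := hiso v.
        have u'v : u' != v by apply/eqP => E; subst u'; rewrite hirr in hu'.
        have hu'n : u' \in cnbh e v by rewrite inE hu' orbT.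
        have := subsetP hsub u' hu'n; rewrite inE play_ne // => /eqP.
        exact: hwl u' hu'n.
      rewrite play_ne // in hw'; exact: hwl w (cnbh_refl e w) hw'.
    rewrite play_ne // in hu.
    have [y hy fy] := hJf u (ltac:(by rewrite hu)) (~~ c').
    have yv : y != v by apply/eqP => E; subst y; rewrite fv in fy.
    have := subsetP hsub y hy; rewrite inE play_ne // fy.
    by case: c' {hu hsub fy}.
  - by exists v; rewrite play_v.
  - move=> z hz zv; apply: sat_play => //; apply: hJf; by rewrite -(play_ne f c zv).
move=> hbt; have [z0 hz0] := hb hbt.
apply: (hB z0); split => //; split; first by exists z0.
move=> z hz _; exact: hJf.
Qed.

Theorem mainTheorem8 (T : finType) (e : rel T) :
  symmetric e -> irreflexive e ->
  (forall x y : T, connect e x y) ->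
  (forall v : T, exists u : T, e v u) ->
  dom_wins e (SepyTurn false) (empty_coloring T).
Proof.
move=> hsym hirr hconn hiso.
apply: ((step hsym hirr hconn hiso erefl).2 false); split => // z.
by rewrite ffunE.
Qed.
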